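(* Let $X$ be a finite set, $C_X$ a facegram over $X$ with filtration $F_X=\Psi(C_X)$, and let $S$ be any collection of nonempty subsets of $X$ with $\mathbf{s}(C_X)\subset S\subset\mathbf{pow}(X)$. Then $$\mathbf{mgm}(C_X)=\Big\{\Big\{\Big[F_X(\sigma),\min_{\sigma\subsetneq\tau\in S}F_X(\tau)\Big)\ \Big|\ \sigma\in S\Big\}\Big\},$$ where empty intervals are discarded and a minimum over the empty set is $+\infty$.
   Context: $\mathbf{pow}(X)$ is the set of nonempty subsets of $X$. A facegram over $X$ is a monotone map $C_X$ from $\mathbb{R}$ to face-sets of $X$ (families of pairwise inclusion-incomparable nonempty subsets, ordered by: each face of one lies in a face of the other) which equals $\{X\}$ for large $t$ and, for some reals $a_1<\dots<a_n$, is $\emptyset$ on $(-\infty,a_1)$ and constant on each $[a_i,a_{i+1})$ ($a_{n+1}:=\infty$). $\Psi(C_X)(S):=\min\{t\mid S\text{ is contained in some face of }C_X(t)\}$. $\mathbf{s}(C_X):=\{\sigma\mid\sigma\in C_X(t)\text{ for some }t\}$. For nonempty $\sigma$, $I_\sigma:=\{t\mid\sigma\in C_X(t)\}$, and $\mathbf{mgm}(C_X)$ is the multiset of nonempty $I_\sigma$ over all nonempty $\sigma\subset X$. *)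

(* Defs.v *)
From HB Require Import structures.
From mathcomp Require Import all_boot all_order all_algebra.
From mathcomp Require Import boolp classical_sets reals.
Set Implicit Arguments. Unset Strict Implicit. Unset Printing Implicit Defensive.
Import Order.TTheory GRing.Theory Num.Theory.
Local Open Scope ring_scope.
Local Open Scope classical_set_scope.

Notation fset0 := (@finset.set0 _).

Section Facegrams.
Variables (R : realType) (X : finType).

Definition is_faceset (A : {set {set X}}) : Prop :=
  fset0 \notin A /\
  (forall f g, f \in A -> g \in A -> f \subset g -> f = g).

Definition face_le (A B : {set {set X}}) : Prop :=
  forall f, f \in A -> exists2 g, g \in B & f \subset g.

Definition facegram (C : R -> {set {set X}}) : Prop :=
  [/\ (forall t, is_faceset (C t)),
      (forall s t, s <= t -> face_le (C s) (C t)),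
      (exists T : R, forall t, T <= t -> C t = [set [set: X]]%SET) &
      (exists a : seq R,
         [/\ a != [::], sorted <%R a,
             (forall t, t < head 0 a -> C t = fset0) &
             (forall (i : nat) (t t' : R), (i < size a)%N ->
                 a`_i <= t -> a`_i <= t' ->
                 ((i.+1 < size a)%N -> t < a`_i.+1 /\ t' < a`_i.+1) ->
                 C t = C t')])].

Definition Psi (C : R -> {set {set X}}) (S : {set X}) : R :=
  inf [set t : R | exists2 f, f \in C t & S \subset f].

Definition faces_of (C : R -> {set {set X}}) (sigma : {set X}) : Prop :=
  exists t : R, sigma \in C t.

Definition life (C : R -> {set {set X}}) (sigma : {set X}) : set R :=
  [set t | sigma \in C t].

Definition bar_interval (F : {set X} -> R) (S : {set {set X}})
    (sigma : {set X}) : set R :=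
  [set t | F sigma <= t /\
           forall tau, tau \in S -> sigma \proper tau -> t < F tau].

End Facegrams.

(* Main.v *)
Require Import Defs.
From HB Require Import structures.
From mathcomp Require Import all_boot all_order all_algebra.
From mathcomp Require Import boolp classical_sets reals.
Import Order.TTheory GRing.Theory Num.Theory.
Local Open Scope ring_scope.

Lemma sorted_step (R : realType) (a : seq R) (t : R) :
  a != [::] -> sorted <%R a -> head 0 a <= t ->
  exists i, [/\ (i < size a)%N, a`_i <= t & ((i.+1 < size a)%N -> t < a`_i.+1)].
Proof.
elim: a => [//|x l IH] _ /= sl ht.
case: l IH sl => [|y l] IH sl.
  by exists 0%N; split.
have [lt|le] := ltP t y.
  by exists 0%N; split.
have [i [h1 h2 h3]] := IH isT (path_sorted sl) le.
by exists i.+1; split.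
Qed.

Section Main.
Variables (R : realType) (X : finType) (C : R -> {set {set X}}).
Hypothesis HC : facegram C.

Definition AA (s : {set X}) : set R := fun t => exists2 f, f \in C t & s \subset f.

Lemma AA_inf (s : {set X}) : has_inf (AA s).
Proof.
case: HC => _ _ [T HT] [a [a0 sa Hlow _]]; split.
  exists T; exists [set: X]%SET; first by rewrite HT // finset.in_set1.
  exact: finset.subsetT.
exists (head 0 a) => t [f ft _].
rewrite leNgt; apply/negP => lt; by rewrite Hlow // inE in ft.
Qed.

Lemma AA_ge (s : {set X}) (t : R) : (exists2 f, f \in C t & s \subset f) -> Psi C s <= t.
Proof. by move=> h; apply: ge_inf; [case: (AA_inf s)|]. Qed.

Lemma loc_const (t : R) : exists2 d : R, 0 < d & forall s, t <= s -> s < t + d -> C s = C t.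
Proof.
case: HC => _ _ _ [a [a0 sa Hlow Hstep]].
have [lt|le] := ltP t (head 0 a).
  exists (head 0 a - t); first by rewrite subr_gt0.
  move=> s ts; rewrite addrC subrK => sa0; by rewrite !Hlow.
have [i [h1 h2 h3]] := @sorted_step R a t a0 sa le.
case: (ltnP i.+1 (size a)) => hi.
  have tl := h3 hi.
  exists (a`_i.+1 - t); first by rewrite subr_gt0.
  move=> s ts; rewrite addrC subrK => sl.
  apply: (Hstep i) => //; try exact: le_trans ts.
exists 1; first exact: ltr01.
move=> s ts _; apply: (Hstep i) => //; try exact: le_trans ts.
by move=> h; exfalso; move: hi; rewrite leqNgt h.
Qed.

Lemma AA_le (s : {set X}) (t : R) : Psi C s <= t -> exists2 f, f \in C t & s \subset f.
Proof.
case: HC => _ Hmono _ _.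
rewrite le_eqVlt => /orP[/eqP <-|lt].
  have [d d0 Hd] := loc_const (Psi C s).
  have [u [f fu sf] ul] := inf_adherent d0 (AA_inf s).
  have hu : Psi C s <= u by apply: AA_ge; exists f.
  by rewrite -(Hd u hu ul); exists f.
have [|u [f fu sf] ul] := inf_adherent (E:=AA s) (eps := t - Psi C s) _ (AA_inf s).
  by rewrite subr_gt0.
rewrite addrC subrK in ul.
have [g gt fg] := (Hmono u t (ltW ul) : face_le (C u) (C t)) f fu.
by exists g => //; apply: fintype.subset_trans fg.
Qed.

Lemma key (S : {set {set X}}) (s : {set X}) (t : R) :
  (forall sigma, faces_of C sigma -> sigma \in S) ->
  (s \in C t <-> bar_interval (Psi C) S s t).
Proof.
move=> HS; case: HC => Hface _ _ _; split.
  move=> st; split; first by apply: AA_ge; exists s.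
  move=> tau tS stau; rewrite ltNge; apply/negP => /AA_le [g gt tg].
  have sg : s \subset g by apply: fintype.subset_trans tg; exact: proper_sub.
  have eg := (Hface t).2 _ _ st gt sg; subst g.
  by move: (proper_sub_trans stau tg); rewrite fintype.properxx.
case=> h1 h2; have [g gt sg] := @AA_le s t h1.
have gS : g \in S by apply: HS; exists t.
case: (eqVneq s g) => [-> //|neq].
have pg : s \proper g by rewrite finset.properEneq neq sg.
have := h2 g gS pg; rewrite ltNge => /negP; case.
by apply: AA_ge; exists g.
Qed.

End Main.

Theorem mainTheorem12 (R : realType) (X : finType)
    (C : R -> {set {set X}}) (S : {set {set X}}) :
  facegram C ->
  fset0 \notin S ->
  (forall sigma, faces_of C sigma -> sigma \in S) ->
  forall U : set R,
    #|finset (fun sigma : {set X} =>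
        `[< sigma != fset0 /\ life C sigma <> classical_sets.set0 /\ life C sigma = U >])| =
    #|finset (fun sigma : {set X} =>
        `[< sigma \in S /\ bar_interval (Psi C) S sigma <> classical_sets.set0 /\
            bar_interval (Psi C) S sigma = U >])|.
Proof.
move=> HC S0 HS U; apply: eq_card => s; rewrite !finset.inE.
congr (asbool _); apply/propext.
case: (boolP (s \in S)) => sS.
  have E : life C s = bar_interval (Psi C) S s.
    by apply/seteqP; split => t; case: (@key R X C HC S s t HS).
  rewrite E; split; first by case=> _ h; split.
  case=> _ h; split; last exact: h.
  by apply/eqP => e; move: S0; rewrite -e sS.
split; last by case.
case=> _ [ne _]; exfalso; apply: ne; apply/seteqP; split => // t /= st.
by move: sS; rewrite (HS s) //; exists t.
Qed.
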